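(* Let $T$ be a pre-truss and $P$ a non-empty normal sub-heap of $T$. Then $P$ is a paragon if and only if, for all $a,b\in T$ and $p,e\in P$, $$[a[p,e,b],ab,e]\in P\quad\text{and}\quad[[p,e,b]a,ba,e]\in P.$$
   Context: A heap is a set with a ternary operation $[-,-,-]$ satisfying $[a_1,a_2,[a_3,a_4,a_5]]=[[a_1,a_2,a_3],a_4,a_5]$ and $[a,a,b]=b=[b,a,a]$. A normal sub-heap is a non-empty subset $S$ closed under $[-,-,-]$ with $[[a,e,s],a,e]\in S$ for all $a$ in the heap and $e,s\in S$; $a\sim_S b$ iff $[a,b,s]\in S$ for some (equivalently all) $s\in S$. A pre-truss is a heap with an associative binary operation (juxtaposition). A sub-heap $S$ of $T$ is left-closed if $[ts',ts,s]\in S$ for all $s,s'\in S$, $t\in T$, right-closed if $[s't,st,s]\in S$ for all such, and closed if both. A paragon is a non-empty normal sub-heap $P$ such that every equivalence class of $\sim_P$ is a closed sub-heap of $T$. *)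

(* Defs.v *)
(* [h a b c] stands for the heap bracket [a,b,c]. *)
Definition is_heap {T : Type} (h : T -> T -> T -> T) : Prop :=
  (forall a1 a2 a3 a4 a5 : T,
      h a1 a2 (h a3 a4 a5) = h (h a1 a2 a3) a4 a5) /\
  (forall a b : T, h a a b = b /\ h b a a = b).

(* A pre-truss: a heap with an associative binary operation [m]
   (juxtaposition: [m a b] is "ab"). *)
Definition is_pretruss {T : Type} (h : T -> T -> T -> T) (m : T -> T -> T) : Prop :=
  is_heap h /\ (forall a b c : T, m a (m b c) = m (m a b) c).

Definition sub_heap {T : Type} (h : T -> T -> T -> T) (S : T -> Prop) : Prop :=
  forall x y z : T, S x -> S y -> S z -> S (h x y z).

Definition normal_subheap {T : Type} (h : T -> T -> T -> T) (S : T -> Prop) : Prop :=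
  (exists s : T, S s) /\ sub_heap h S /\
  (forall a e s : T, S e -> S s -> S (h (h a e s) a e)).

Definition heap_rel {T : Type} (h : T -> T -> T -> T) (S : T -> Prop) (a b : T) : Prop :=
  exists s : T, S s /\ S (h a b s).

Definition left_closed {T : Type} (h : T -> T -> T -> T) (m : T -> T -> T)
  (S : T -> Prop) : Prop :=
  forall s s' t : T, S s -> S s' -> S (h (m t s') (m t s) s).

Definition right_closed {T : Type} (h : T -> T -> T -> T) (m : T -> T -> T)
  (S : T -> Prop) : Prop :=
  forall s s' t : T, S s -> S s' -> S (h (m s' t) (m s t) s).

Definition closed_subheap {T : Type} (h : T -> T -> T -> T) (m : T -> T -> T)
  (S : T -> Prop) : Prop :=
  sub_heap h S /\ left_closed h m S /\ right_closed h m S.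

Definition paragon {T : Type} (h : T -> T -> T -> T) (m : T -> T -> T)
  (P : T -> Prop) : Prop :=
  normal_subheap h P /\
  (forall a : T, closed_subheap h m (fun x => heap_rel h P a x)).

(* Main.v *)
Require Import Defs.

Section H.
Variables (T : Type) (h : T -> T -> T -> T).
Hypothesis HH : is_heap h.

Lemma hA' a b c d e : h (h a b c) d e = h a b (h c d e).
Proof. destruct HH as [A _]. now rewrite A. Qed.
Lemma hK1 a b : h a a b = b.
Proof. destruct HH as [_ K]. apply K. Qed.
Lemma hK2 a b : h b a a = b.
Proof. destruct HH as [_ K]. apply K. Qed.
Lemma hL a b c d : h a b (h b c d) = h a c d.
Proof. destruct HH as [A _]. now rewrite A, hK2. Qed.
Lemma hM a b c d e : h a (h b c d) e = h a d (h c b e).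
Proof.
  destruct HH as [A _]. symmetry.
  transitivity (h a d (h c b (h (h b c d) (h b c d) e))); [now rewrite hK1|].
  rewrite (A c b), (A a d), hL, hK1, hK2. reflexivity.
Qed.
End H.

Ltac hnorm HH := repeat (rewrite ?(hA' _ _ HH), ?(hM _ _ HH), ?(hK1 _ _ HH), ?(hK2 _ _ HH), ?(hL _ _ HH)).

Theorem lemma3p11 (T : Type) (h : T -> T -> T -> T) (m : T -> T -> T)
  (HT : is_pretruss h m) (P : T -> Prop) (HP : normal_subheap h P) :
  paragon h m P <->
  (forall a b p e : T, P p -> P e ->
     P (h (m a (h p e b)) (m a b) e) /\ P (h (m (h p e b) a) (m b a) e)).
Proof.
  destruct HT as [HH _].
  destruct HP as [[s0 Ps0] [Hsub Hnorm]].
  assert (Hall : forall a x, heap_rel h P a x -> forall s, P s -> P (h a x s)).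
  { intros a x [s [Ps Px]] s' Ps'.
    replace (h a x s') with (h (h a x s) s s') by (hnorm HH; reflexivity).
    now apply Hsub. }
  assert (Hinv : forall e q, P e -> P q -> P (h e q e)) by (intros; now apply Hsub).
  split.
  - intros [_ Hcl] a b p e Pp Pe.
    destruct (Hcl b) as [_ [Hl Hr]].
    assert (Rb : heap_rel h P b b) by (exists e; split; [assumption| now rewrite (hK1 _ _ HH)]).
    assert (Rc : heap_rel h P b (h p e b)).
    { exists e; split; [assumption|]. hnorm HH. now apply Hsub. }
    split.
    + specialize (Hl b (h p e b) a Rb Rc).
      pose proof (Hall _ _ Hl e Pe) as H1.
      pose proof (Hinv e _ Pe H1) as H2. revert H2. now hnorm HH.
    + specialize (Hr b (h p e b) a Rb Rc).
      pose proof (Hall _ _ Hr e Pe) as H1.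
      pose proof (Hinv e _ Pe H1) as H2. revert H2. now hnorm HH.
  - intros Hc. split; [split; [exists s0; exact Ps0| split; assumption]|].
    intros a.
    set (e := s0). assert (Pe : P e) by exact Ps0.
    assert (Key : forall s s', heap_rel h P a s -> heap_rel h P a s' -> P (h s' s e)).
    { intros s s' Rs Rs'.
      pose proof (Hall _ _ Rs e Pe) as H1.
      pose proof (Hall _ _ Rs' e Pe) as H2.
      assert (Pq : P (h (h a s e) (h a s' e) e)) by (apply Hsub; assumption).
      pose proof (Hnorm (h s a e) e _ Pe Pq) as H3. revert H3. now hnorm HH. }
    split; [|split].
    + intros x y z Rx Ry Rz. exists e. split; [exact Pe|].
      pose proof (Hall _ _ Rx e Pe). pose proof (Hall _ _ Ry e Pe).
      pose proof (Hall _ _ Rz e Pe).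
      replace (h a (h x y z) e) with (h (h a z e) (h a y e) (h a x e))
        by (hnorm HH; reflexivity).
      apply Hsub; assumption.
    + intros s s' t Rs Rs'. exists e. split; [exact Pe|].
      pose proof (Key s s' Rs Rs') as Pp.
      destruct (Hc t s (h s' s e) e Pp Pe) as [H1 _].
      replace (h (h s' s e) e s) with s' in H1 by (hnorm HH; reflexivity).
      pose proof (Hall _ _ Rs e Pe) as H0.
      pose proof (Hinv e _ Pe H1) as H2.
      replace (h a (h (m t s') (m t s) s) e) with (h (h a s e) e (h e (h (m t s') (m t s) e) e))
        by (hnorm HH; reflexivity).
      apply Hsub; assumption.
    + intros s s' t Rs Rs'. exists e. split; [exact Pe|].
      pose proof (Key s s' Rs Rs') as Pp.
      destruct (Hc t s (h s' s e) e Pp Pe) as [_ H1].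
      replace (h (h s' s e) e s) with s' in H1 by (hnorm HH; reflexivity).
      pose proof (Hall _ _ Rs e Pe) as H0.
      pose proof (Hinv e _ Pe H1) as H2.
      replace (h a (h (m s' t) (m s t) s) e) with (h (h a s e) e (h e (h (m s' t) (m s t) e) e))
        by (hnorm HH; reflexivity).
      apply Hsub; assumption.
Qed.
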